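(* Let $N\in\mathbb{N}_+$, let $\mathcal{R}$ be a countable set, and let $f:\mathbb{R}^N\to\mathcal{R}$. Suppose $f$ admits a dominating set $S\subseteq[N]$ of sensitivity $s>0$. Let $\epsilon>0$ and consider the mechanism $\mathcal{A}$ which, on input $x\in\mathbb{R}^N$, samples independent random variables $X_i\sim\mathsf{Lap}(s/\epsilon)$ for $i\in S$, forms $\tilde x$ by $\tilde x^{(i)}=x^{(i)}+X_i$ for $i\in S$ and $\tilde x^{(i)}=x^{(i)}$ for $i\notin S$, and outputs $f(\tilde x)$. Then $\mathcal{A}$ is $(\epsilon,0)$-differentially private: for all neighboring $x,x'\in\mathbb{R}^N$ and all $y\in\mathcal{R}$, $\Pr[\mathcal{A}(x)=y]\le e^{\epsilon}\Pr[\mathcal{A}(x')=y]$.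
   Context: Two vectors $x,x'\in\mathbb{R}^N$ are neighboring if $\|x-x'\|_0\le 1$ and $\|x-x'\|_\infty\le 1$ (they differ in at most one coordinate, by at most $1$). For $x\in\mathbb{R}^N$ and $S\subseteq[N]$, $x|_S\in\mathbb{R}^S$ denotes the restriction of $x$ to the coordinates in $S$, and $f(x|_S,x|_{[N]\setminus S})$ means $f(x)$. Dominating set: $f$ admits a dominating set $S\subseteq[N]$ of sensitivity $s\ge 0$ if for every pair of neighboring $x,x'$ there is a vector $a\in\mathbb{R}^S$ with $\|a\|_1\le s$ such that (i) $a$ is a function only of $f(x)$ and $x'-x$, and (ii) $f(x'|_S+a,\;x'|_{[N]\setminus S})=f(x)$. $\mathsf{Lap}(b)$ is the Laplace distribution with density $\frac{1}{2b}e^{-|x|/b}$. *)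

(* Defs.v *)
From HB Require Import structures.
From mathcomp Require Import all_boot all_order all_algebra.
From mathcomp Require Import all_classical all_reals all_analysis.
Set Implicit Arguments. Unset Strict Implicit. Unset Printing Implicit Defensive.
Import Order.TTheory GRing.Theory Num.Theory.
Local Open Scope classical_set_scope.
Local Open Scope ring_scope.

Definition neighboring (R : realType) (N : nat) (x x' : N.-tuple R) : Prop :=
  exists i : 'I_N, (forall j : 'I_N, j != i -> tnth x j = tnth x' j) /\
                   `|tnth x i - tnth x' i| <= 1.

(* x' with the coordinates in S shifted by a (coordinates outside S unchanged):
   this is (x'|_S + a, x'|_{[N]\S}). *)
Definition shift_on (R : realType) (N : nat) (S : {set 'I_N}) (x : N.-tuple R)
  (a : 'I_N -> R) : N.-tuple R :=
  [tuple (if i \in S then tnth x i + a i else tnth x i) | i < N].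

(* f admits the dominating set S of sensitivity s: a is chosen by a function g
   of (f x) and (x' - x) only; ||a||_1 is computed over S. *)
Definition dominating_set (R : realType) (N : nat) (Rg : Type)
  (f : N.-tuple R -> Rg) (S : {set 'I_N}) (s : R) : Prop :=
  exists g : Rg -> ('I_N -> R) -> ('I_N -> R),
    forall x x' : N.-tuple R, neighboring x x' ->
      let a := g (f x) (fun i => tnth x' i - tnth x i) in
      \sum_(i in S) `|a i| <= s /\ f (shift_on S x' a) = f x.

Definition laplace_pdf (R : realType) (b : R) (t : R) : R :=
  (2 * b)^-1 * expR (- `|t| / b).

Definition is_laplace (d : measure_display) (T : measurableType d) (R : realType)
  (P : probability T R) (b : R) (X : T -> R) : Prop :=
  measurable_fun setT X /\
  forall A : set R, measurable A ->
    P (X @^-1` A) = (\int[lebesgue_measure]_(t in A) (laplace_pdf b t)%:E)%E.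

Definition mutually_independent (d : measure_display) (T : measurableType d)
  (R : realType) (P : probability T R) (N : nat) (S : {set 'I_N})
  (X : 'I_N -> T -> R) : Prop :=
  forall (J : {set 'I_N}) (A : 'I_N -> set R),
    J \subset S -> (forall i, measurable (A i)) ->
    P (\big[setI/setT]_(i in J) (X i @^-1` A i)) =
    (\prod_(i in J) P (X i @^-1` A i))%E.

Definition mech_event (T : Type) (R : realType) (N : nat) (Rg : Type)
  (f : N.-tuple R -> Rg) (S : {set 'I_N}) (X : 'I_N -> T -> R)
  (x : N.-tuple R) (y : Rg) : set T :=
  [set w | f (shift_on S x (fun i => X i w)) = y].

(* Main.v *)
Require Import Defs.
From HB Require Import structures.
From mathcomp Require Import all_boot all_order all_algebra.
From mathcomp Require Import all_classical all_reals all_analysis.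
From mathcomp Require Import measurable_realfun.
From mathcomp Require Import ring lra.
Import Order.TTheory GRing.Theory Num.Theory.
Local Open Scope classical_set_scope.
Local Open Scope ring_scope.
Set Implicit Arguments. Unset Strict Implicit. Unset Printing Implicit Defensive.

Section shift1.
Context (R : realType).

Lemma mshift (t : R) : measurable_fun setT (fun u : R => u + t).
Proof. by apply: measurable_funD. Qed.
Lemma mshift' (t : R) : measurable_fun (T:=measurableTypeR R) (U:=measurableTypeR R) setT (fun u : R => u + t).
Proof. exact: mshift. Qed.

Lemma leb_shift (t : R) (A : set R) : measurable A ->
  lebesgue_measure ((fun u => u + t) @^-1` A) = lebesgue_measure A.
Proof.
move=> mA; symmetry.
have := (@lebesgue_measure_unique R (@measure_function_pushforward__canonical__measure_function_Measure _ _ (measurableTypeR R) (measurableTypeR R) _ lebesgue_measure _ (mshift' t))).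
move=> H; rewrite H //.
move=> _ [[a c] _ <-] /=.
rewrite /pushforward.
have -> : (fun u => u + t) @^-1` `]a, c] = `]a - t, c - t]%classic.
  by apply/seteqP; split => u /=; rewrite !in_itv /= ltrBlDr lerBrDr.
rewrite (@lebesgue_measure_itv R `]a, c]) (@lebesgue_measure_itv R `]a - t, c - t]) /= !lte_fin ltrD2r.
by case: ifP => // _; rewrite -!EFinD; congr (_%:E); ring.
Qed.

Lemma mlap (b : R) : measurable_fun setT (laplace_pdf b).
Proof.
rewrite /laplace_pdf; apply: measurable_funM => //.
apply: measurableT_comp; first exact: measurable_expR.
apply: measurable_funM => //; apply: measurable_funN.
exact: normr_measurable.
Qed.

Lemma lap_ge0 (b : R) t : 0 < b -> 0 <= laplace_pdf b t.
Proof.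
move=> b0; rewrite /laplace_pdf mulr_ge0 ?expR_ge0 //.
by rewrite invr_ge0 mulr_ge0 // ltW.
Qed.

Lemma lap_pt (b t v : R) : 0 < b ->
  laplace_pdf b (v - t) <= expR (`|t| / b) * laplace_pdf b v.
Proof.
move=> b0; rewrite /laplace_pdf mulrCA ler_wpM2l //.
  by rewrite invr_ge0 mulr_ge0 // ltW.
rewrite -expRD ler_expR -mulrDl ler_pM2r ?invr_gt0 //.
have : `|v| <= `|v - t| + `|t|.
  by rewrite -[X in `|X|](subrK t v) ler_normD.
lra.
Qed.

Context (d : measure_display) (T : measurableType d) (P : probability T R).

Lemma lap_shift (b : R) (Y : T -> R) (t : R) (C : set R) : 0 < b ->
  is_laplace P b Y -> measurable C ->
  (P (Y @^-1` ((fun u => u + t)%R @^-1` C)) <=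
    (expR (`|t| / b)%R)%:E * P (Y @^-1` C))%E.
Proof.
move=> b0 [mY HY] mC.
have mC' : measurable ((fun u => u + t) @^-1` C).
  by rewrite -[X in measurable X]setTI; apply: mshift.
rewrite (HY _ mC') (HY _ mC).
have -> : (\int[lebesgue_measure]_(u in ((fun u => u + t)%R @^-1` C)) (laplace_pdf b u)%:E = \int[@pushforward _ _ (measurableTypeR R) (measurableTypeR R) _ lebesgue_measure (fun u : R => u + t)%R]_(v in C) (laplace_pdf b (v - t)%R)%:E)%E.
  have H := @ge0_integral_pushforward _ _ _ _ R _ (mshift' t) lebesgue_measure C (fun v => (laplace_pdf b (v - t)%R)%:E) mC.
  etransitivity; last first.
    symmetry; apply: H.
    - apply/measurable_EFinP; apply: measurable_funTS.
      by apply: measurableT_comp; [exact: mlap| exact: measurable_funB].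
    - by move=> v _; rewrite lee_fin lap_ge0.
  by apply: eq_integral => u _ /=; rewrite addrK.
rewrite (eq_measure_integral lebesgue_measure); last first.
  by move=> mf A mA _; rewrite /= /pushforward; exact: leb_shift.
  exact: mshift'.
have H3 := @ge0_integralZl_EFin _ _ _ lebesgue_measure C mC (fun v => (laplace_pdf b v)%:E).
rewrite -H3 ?expR_ge0 //; last 2 first.
- by move=> v _; rewrite lee_fin lap_ge0.
- apply/measurable_EFinP; apply: measurable_funTS; exact: mlap.
apply: ge0_le_integral => //.
- by move=> v _; rewrite lee_fin lap_ge0.
- apply/measurable_EFinP; apply: measurable_funTS.
  by apply: measurableT_comp; [exact: mlap| exact: measurable_funB].
- apply/measurable_EFinP; apply: measurable_funTS.
  by apply: measurable_funM => //; exact: mlap.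
- by move=> v _; rewrite lee_fin lap_pt.
Qed.
End shift1.

Notation pfm m mf := (measure_function_pushforward__canonical__measure_function_Measure m mf).

Lemma in_bigsetI (I : finType) (J : pred I) (U : Type) (F : I -> set U) x :
  (\big[setI/setT]_(i | J i) F i) x <-> (forall i, J i -> F i x).
Proof.
split.
  by move=> H i iJ; move: H; rewrite (bigD1 i) //= => -[].
by move=> H; apply: (big_ind (fun Y : set U => Y x)) => //.
Qed.

Section tup.
Context (R : realType) (N : nat).

Definition tadd (z : N.-tuple R) (a : 'I_N -> R) : N.-tuple R :=
  [tuple tnth z i + a i | i < N].

Lemma measurable_mktuple d' (U : measurableType d') (F : 'I_N -> U -> R) :
  (forall i, measurable_fun setT (F i)) ->
  measurable_fun setT (fun w => [tuple F i w | i < N]).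
Proof.
move=> mF; apply/measurable_fun_tnthP => i.
have -> : ((fun z : N.-tuple R => tnth z i) \o (fun w => [tuple F i w | i < N])) = F i.
  by apply/funext => w /=; rewrite tnth_mktuple.
exact: mF.
Qed.

Lemma mtadd a : measurable_fun setT (fun z => tadd z a).
Proof.
apply: measurable_mktuple => i; apply: measurable_funD => //.
exact: measurable_tnth.
Qed.

Definition rect (A : 'I_N -> set R) : set (N.-tuple R) :=
  [set z | forall i, A i (tnth z i)].

Definition rects : set (set (N.-tuple R)) :=
  [set B | exists A : 'I_N -> set R, (forall i, measurable (A i)) /\ B = rect A].

Lemma rects_gen : @measurable _ (N.-tuple R) = <<s rects >>.
Proof.
apply/seteqP; split.
  apply: smallest_sub; first exact: smallest_sigma_algebra.
  move=> B; rewrite -bigcup_seq /= => -[i _ [Y mY <-]].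
  apply: sub_sigma_algebra.
  exists (fun k => if k == i then Y else setT); split.
    by move=> k; case: ifP.
  apply/seteqP; split => z /=.
    by move=> [_ Yz] k; case: ifP => // /eqP ->.
  by move=> H; split => //; have := H i; rewrite eqxx.
apply: smallest_sub; first exact: sigma_algebra_measurable.
move=> _ [A [mA ->]].
have -> : rect A = \big[setI/setT]_i ((fun z : N.-tuple R => tnth z i) @^-1` A i).
  apply/seteqP; split => z.
    by move=> H; apply/in_bigsetI => i _; exact: H.
  by move/in_bigsetI => H i; exact: H.
apply: big_ind => //; first by move=> ? ? ? ?; exact: measurableI.
move=> i _; rewrite -[X in measurable X]setTI.
exact: measurable_tnth.
Qed.

Lemma rects_setI : setI_closed rects.
Proof.
move=> _ _ [A [mA ->]] [B [mB ->]].
exists (fun i => A i `&` B i); split; first by move=> i; exact: measurableI.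
by apply/seteqP; split => z /=; [move=> [H1 H2] i; split|move=> H; split => i; case: (H i)].
Qed.
End tup.

Section indep.
Context (R : realType) (N : nat) (d : measure_display) (T : measurableType d)
  (P : probability T R).
Variables (S : {set 'I_N}) (X : 'I_N -> T -> R).
Hypothesis mX : forall i, i \in S -> measurable_fun setT (X i).
Hypothesis indep : mutually_independent P S X.

Definition Psi (j : 'I_N) (w : T) : N.-tuple R :=
  [tuple if (i \in S) && (i != j) then X i w else 0 | i < N].

Lemma mPsi j : measurable_fun setT (Psi j).
Proof.
apply: measurable_mktuple => i.
case: (boolP ((i \in S) && (i != j))) => [/andP[iS _]|_].
  exact: mX.
exact: measurable_cst.
Qed.

Lemma mXpre j C : j \in S -> measurable C -> measurable (X j @^-1` C).
Proof. by move=> jS mC; rewrite -[X in measurable X]setTI; exact: mX. Qed.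

Lemma indep_rect j (A : 'I_N -> set R) C : j \in S ->
  (forall i, measurable (A i)) -> measurable C ->
  P (Psi j @^-1` rect A `&` X j @^-1` C) =
  (P (Psi j @^-1` rect A) * P (X j @^-1` C))%E.
Proof.
move=> jS mA mC.
case: (pselect (forall i, ~~ ((i \in S) && (i != j)) -> A i 0)) => cond; last first.
  have -> : Psi j @^-1` rect A = set0.
    apply/seteqP; split => w // H; apply: cond => i h.
    by have := H i; rewrite /= tnth_mktuple (negbTE h).
  by rewrite set0I measure0 mul0e.
have E1 : Psi j @^-1` rect A = \big[setI/setT]_(i in S :\ j) (X i @^-1` A i).
  apply/seteqP; split => w.
    move=> H; apply/in_bigsetI => i; rewrite in_setD1 => /andP[ij iS].
    by have := H i; rewrite /= tnth_mktuple iS ij.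
  move/in_bigsetI => H i; rewrite /= tnth_mktuple.
  case: (boolP ((i \in S) && (i != j))) => h.
    by apply: H; rewrite in_setD1 andbC.
  exact: cond.
pose A' := fun i => if i == j then C else A i.
have mA' : forall i, measurable (A' i) by move=> i; rewrite /A'; case: ifP.
have E2 : Psi j @^-1` rect A `&` X j @^-1` C =
    \big[setI/setT]_(i in S) (X i @^-1` A' i).
  rewrite E1; apply/seteqP; split => w.
    move=> [H1 H2]; apply/in_bigsetI => i iS; rewrite /A'.
    case: eqVneq => [->//|ij].
    by move/in_bigsetI : H1; apply; rewrite in_setD1 ij iS.
  move/in_bigsetI => H; split.
    apply/in_bigsetI => i; rewrite in_setD1 => /andP[ij iS].
    by have := H i iS; rewrite /A' /= (negbTE ij).
  by have := H j jS; rewrite /A' /= eqxx.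
rewrite E2 E1 (indep (subxx S) mA') (indep (subD1set S j) mA).
rewrite (bigD1 j) //= /A' eqxx muleC; congr (_ * _)%E.
apply: eq_big => [i|i /andP[_ ij]]; first by rewrite in_setD1 andbC.
by rewrite (negbTE ij).
Qed.


Lemma indep_psi j (A : set (N.-tuple R)) C : j \in S ->
  measurable A -> measurable C ->
  P (Psi j @^-1` A `&` X j @^-1` C) =
  (P (Psi j @^-1` A) * P (X j @^-1` C))%E.
Proof.
move=> jS mA mC.
have mXC := mXpre jS mC.
pose m1 := pfm (mrestr P mXC) (mPsi j).
have k0 : (0 <= fine (P (X j @^-1` C)))%R by apply: fine_ge0.
pose m2 := mscale (NngNum k0) (pfm P (mPsi j)).
have H := @measure_unique _ R _ (@rects R N) (fun _ => setT) (@rects_gen R N) (@rects_setI R N) _ _ m1 m2.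
have := H _ _ _ _ A mA.
rewrite /m1 /m2 /= /mscale /= /pushforward /mrestr /=.
rewrite fineK ?fin_num_measure // => ->.
- by rewrite muleC.
- move=> _; exists (fun=> setT); split => //.
  by apply/seteqP; split.
- by rewrite bigcup_const.
- move=> _ [B [mB ->]].
  by rewrite /= /pushforward /mrestr /= indep_rect // muleC.
- move=> _; rewrite /= /pushforward /mrestr /=.
  apply: (le_lt_trans (probability_le1 _ _)); last exact: ltry.
  by apply: measurableI => //; rewrite preimage_setT.
Qed.

End indep.

Section core.
Context (R : realType) (N : nat) (d : measure_display) (T : measurableType d)
  (P : probability T R).
Variables (S : {set 'I_N}) (X : 'I_N -> T -> R) (b : R).
Hypothesis b0 : 0 < b.
Hypothesis lapX : forall i, i \in S -> is_laplace P b (X i).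
Hypothesis indep : mutually_independent P S X.

Let mX : forall i, i \in S -> measurable_fun setT (X i).
Proof. by move=> i iS; case: (lapX iS). Qed.

Definition Phi (w : T) : N.-tuple R := [tuple if i \in S then X i w else 0 | i < N].
Definition ej (j : 'I_N) (t : R) := fun i : 'I_N => if i == j then t else 0.
Definition Fj (j : 'I_N) (p : N.-tuple R * R) : N.-tuple R :=
  [tuple if i == j then p.2 else tnth p.1 i | i < N].

Lemma mPhi : measurable_fun setT Phi.
Proof.
apply: measurable_mktuple => i.
case: (boolP (i \in S)) => iS; [exact: mX|exact: measurable_cst].
Qed.

Lemma mFj j : measurable_fun setT (Fj j).
Proof.
apply: measurable_mktuple => i.
case: (boolP (i == j)) => _; first exact: measurable_snd.
exact: measurableT_comp (measurable_tnth i) measurable_fst.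
Qed.

Lemma core j t E : j \in S -> measurable E ->
  (P ((fun w => tadd (Phi w) (ej j t)) @^-1` E) <=
   (expR (`|t| / b)%R)%:E * P (Phi @^-1` E))%E.
Proof.
move=> jS mE.
have mXj := mX jS.
pose V := fun w => (Psi S X j w, X j w).
have mV : measurable_fun setT V := measurable_fun_pair (mPsi mX j) mXj.
have mFt : measurable_fun setT (fun p : N.-tuple R * R => Fj j (p.1, p.2 + t)).
  apply: measurableT_comp (mFj j) _.
  apply: measurable_fun_pair; first exact: measurable_fst.
  by apply: measurable_funD => //; exact: measurable_snd.
pose D := Fj j @^-1` E.
pose Dt := (fun p : N.-tuple R * R => Fj j (p.1, p.2 + t)) @^-1` E.
have mD : measurable D by rewrite /D -[X in measurable X]setTI; exact: mFj.
have mDt : measurable Dt by rewrite /Dt -[X in measurable X]setTI; exact: mFt.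
have e1 w : tadd (Phi w) (ej j t) = Fj j ((V w).1, (V w).2 + t).
  apply: eq_from_tnth => i.
  rewrite /= !tnth_mktuple /ej; case: eqVneq => [->|ij]; first by rewrite jS.
  by rewrite addr0 andbT.
have e0 w : Phi w = Fj j (V w).
  apply: eq_from_tnth => i.
  rewrite /= !tnth_mktuple; case: eqVneq => [->|ij]; first by rewrite jS.
  by rewrite andbT.
have eq1 : (fun w => tadd (Phi w) (ej j t)) @^-1` E = V @^-1` Dt.
  by apply/seteqP; split => w /=; rewrite e1.
have eq0 : Phi @^-1` E = V @^-1` D.
  by apply/seteqP; split => w /=; rewrite e0.
rewrite eq1 eq0.
have mPsi' : Psi S X j \in mfun by rewrite inE; exact: mPsi.
have mXj' : X j \in mfun by rewrite inE.
pose lawPsi := distribution P (mfun_Sub mPsi').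
pose lawj := distribution P (mfun_Sub mXj').
have PU := @product_measure_unique _ _ _ _ R lawPsi lawj (pfm P mV).
have {}PU : forall Z, measurable Z -> (lawPsi \x lawj)%E Z = P (V @^-1` Z).
  move=> Z mZ; rewrite PU //.
  move=> A B mA mB; rewrite /= /pushforward /distribution /= /pushforward /=.
  exact: indep_psi.
rewrite -!PU // /product_measure1.
have mfD : measurable_fun setT (lawj \o xsection D) := measurable_fun_xsection lawj mD.
have mfDt : measurable_fun setT (lawj \o xsection Dt) := measurable_fun_xsection lawj mDt.
have H3 := @ge0_integralZl_EFin _ _ R lawPsi setT measurableT (lawj \o xsection D)
  (fun x _ => measure_ge0 _ _) mfD (expR (`|t| / b)) (expR_ge0 _).
rewrite -H3.
apply: ge0_le_integral => //.
  by apply: measurable_funeM.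
move=> p _ /=.
have -> : xsection Dt p = (fun u => u + t)%R @^-1` xsection D p.
  by apply/seteqP; split => u; rewrite /xsection /= !inE.
have mxD : measurable (xsection D p) by exact: measurable_xsection.
rewrite /lawj /distribution /= /pushforward /=.
exact: (lap_shift t b0 (lapX jS) mxD).
Qed.
Definition aset (s : seq 'I_N) (a : 'I_N -> R) := fun i => if i \in s then a i else 0.

Lemma multi (s : seq 'I_N) a E : uniq s -> {subset s <= S} -> measurable E ->
  (P ((fun w => tadd (Phi w) (aset s a)) @^-1` E) <=
   (expR ((\sum_(i <- s) `|a i|) / b)%R)%:E * P (Phi @^-1` E))%E.
Proof.
elim: s E => [|j s IH] E.
  move=> _ _ mE; rewrite big_nil mul0r expR0 mul1e.
  apply: le_measure; rewrite ?inE.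
  - by rewrite -[X in measurable X]setTI; apply: (measurableT_comp (mtadd _)) => //; exact: mPhi.
  - by rewrite -[X in measurable X]setTI; exact: mPhi.
  move=> w /=; congr E; apply: eq_from_tnth => i; rewrite tnth_mktuple /aset /=.
  by rewrite addr0.
move=> /= /andP[js us] sub mE.
have jS : j \in S by apply: sub; rewrite inE eqxx.
have sub' : {subset s <= S} by move=> i iS; apply: sub; rewrite inE iS orbT.
pose E' := (fun z => tadd z (aset s a)) @^-1` E.
have mE' : measurable E' by rewrite /E' -[X in measurable X]setTI; exact: mtadd.
have -> : (fun w => tadd (Phi w) (aset (j :: s) a)) @^-1` E =
    (fun w => tadd (Phi w) (ej j (a j))) @^-1` E'.
  apply/seteqP; split => w /=; rewrite /E' /=; congr E;
    apply: eq_from_tnth => i; rewrite !tnth_mktuple /aset /ej inE;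
    case: eqVneq => [->|ij] /=; rewrite ?(negbTE js) ?addr0 //.
apply: (le_trans (core (a j) jS mE')).
rewrite big_cons mulrDl expRD EFinM -muleA.
apply: lee_wpmul2l; first by rewrite lee_fin expR_ge0.
exact: IH.
Qed.

End core.

Theorem theorem3p1 (R : realType) (N : nat) (Rg : countType)
  (f : N.-tuple R -> Rg) (S : {set 'I_N}) (s eps : R)
  (d : measure_display) (T : measurableType d) (P : probability T R)
  (X : 'I_N -> T -> R) :
  (0 < N)%N ->
  (forall y : Rg, measurable (f @^-1` [set y])) ->
  dominating_set f S s -> 0 < s -> 0 < eps ->
  (forall i, i \in S -> is_laplace P (s / eps) (X i)) ->
  mutually_independent P S X ->
  forall (x x' : N.-tuple R) (y : Rg), neighboring x x' ->
    (P (mech_event f S X x y) <= (expR eps)%:E * P (mech_event f S X x' y))%E.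
Proof.
move=> N0 mf [g Hg] s0 eps0 lapX indep x x' y nxx'.
have b0 : 0 < s / eps by apply: divr_gt0.
pose a := g y (fun i => tnth x' i - tnth x i).
pose Ex := fun x0 : N.-tuple R =>
  [set z : N.-tuple R | f (shift_on S x0 (fun i => tnth z i)) = y].
have msh x0 : measurable_fun setT
    (fun z : N.-tuple R => shift_on S x0 (fun i => tnth z i)).
  apply: measurable_mktuple => i; case: (i \in S).
    by apply: measurable_funD => //; exact: measurable_tnth.
  exact: measurable_cst.
have mEx x0 : measurable (Ex x0).
  rewrite (_ : Ex x0 = (fun z : N.-tuple R => shift_on S x0 (fun i => tnth z i))
     @^-1` (f @^-1` [set y])) //.
  by rewrite -[X in measurable X]setTI; apply: msh => //; exact: mf.
have mPhi' : measurable_fun setT (Phi S X) := mPhi lapX.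
have ev x0 : mech_event f S X x0 y = Phi S X @^-1` Ex x0.
  apply/seteqP; split => w; rewrite /mech_event /Ex /=;
    rewrite (_ : shift_on S x0 (fun i => X i w) =
                 shift_on S x0 (fun i => tnth (Phi S X w) i)) //;
    apply: eq_from_tnth => i; rewrite !tnth_mktuple;
    by case: (boolP (i \in S)) => iS //; rewrite tnth_mktuple iS.
rewrite !ev.
have key z : neighboring (shift_on S x (fun i => tnth z i))
                         (shift_on S x' (fun i => tnth z i)) /\
   (fun i => tnth (shift_on S x' (fun i => tnth z i)) i -
             tnth (shift_on S x (fun i => tnth z i)) i) =
   (fun i => tnth x' i - tnth x i).
  split.
    case: nxx' => i [Hi1 Hi2]; exists i; split.
      move=> j ji; rewrite !tnth_mktuple; case: (j \in S); by rewrite Hi1.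
    rewrite !tnth_mktuple; case: (i \in S) => //.
    by rewrite (_ : tnth x i + tnth z i - (tnth x' i + tnth z i) =
                    tnth x i - tnth x' i) //; ring.
  apply/funext => i; rewrite !tnth_mktuple; case: (i \in S) => //; ring.
case: (pselect (exists z, Ex x z)) => [[z0 Hz0]|nE]; last first.
  have -> : Phi S X @^-1` Ex x = set0.
    by apply/seteqP; split => w // H; apply: nE; exists (Phi S X w).
  by rewrite measure0 mule_ge0 // lee_fin expR_ge0.
have [sumb _] : \sum_(i in S) `|a i| <= s /\ True.
  have [nuv dE] := key z0.
  have := Hg _ _ nuv; rewrite /= dE Hz0 => -[H _]; split => //.
have sub : Phi S X @^-1` Ex x `<=`
    (fun w => tadd (Phi S X w) (aset (enum S) a)) @^-1` Ex x'.
  move=> w /= H.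
  have [nuv dE] := key (Phi S X w).
  have := Hg _ _ nuv; rewrite /= dE H => -[_ Hf].
  rewrite /Ex /= -Hf; congr f.
  apply: eq_from_tnth => i; rewrite !tnth_mktuple /aset mem_enum.
  by case: (i \in S) => //; rewrite addrA.
apply: le_trans (le_measure _ _ _ sub) _.
- by rewrite inE -[X in measurable X]setTI; exact: mPhi'.
- rewrite inE -[X in measurable X]setTI.
  by apply: (measurableT_comp (mtadd _)) => //.
apply: le_trans (multi b0 lapX indep a (enum_uniq _) _ (mEx x')) _.
  by move=> i; rewrite mem_enum.
apply: lee_wpmul2r; first exact: measure_ge0.
rewrite lee_fin ler_expR big_enum /=.
rewrite ler_pdivrMr // mulrCA divff ?mulr1 //; last by rewrite gt_eqF.
Qed.
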